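(* Suppose given a pullback square of topological spaces with $C=A\times_BD$, maps $C\to A$, $r\colon C\to D$, $l\colon A\to B$ and $b\colon D\to B$, in which $r$ and $b$ are Serre fibrations and $b$ is surjective. Then $l$ is a Serre fibration. *)

(* Defs.v *)
From HB Require Import structures.
From mathcomp Require Import all_boot all_order all_algebra.
From mathcomp Require Import all_classical all_reals all_analysis.
From mathcomp Require Import Rstruct Rstruct_topology.
From Stdlib Require Rdefinitions.
Set Implicit Arguments. Unset Strict Implicit. Unset Printing Implicit Defensive.
Import Order.TTheory GRing.Theory Num.Theory.
Local Open Scope classical_set_scope.
Local Open Scope ring_scope.

Notation RR := Rdefinitions.R.

Definition unit_cube (n : nat) : set 'rV[RR]_n :=
  [set x | forall i : 'I_n, 0 <= x ord0 i <= 1].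
Arguments unit_cube : clear implicits.

Definition cube_cyl (n : nat) : set ('rV[RR]_n * RR)%type :=
  setX (unit_cube n) (`[0, 1]%classic : set RR).
Arguments cube_cyl : clear implicits.

Definition serre_fibration (E X : topologicalType) (p : E -> X) : Prop :=
  continuous p /\
  forall (n : nat) (f : 'rV[RR]_n -> E) (H : ('rV[RR]_n * RR)%type -> X),
    {within unit_cube n, continuous f} ->
    {within cube_cyl n, continuous H} ->
    (forall x, unit_cube n x -> H (x, 0) = p (f x)) ->
    exists G : ('rV[RR]_n * RR)%type -> E,
      [/\ {within cube_cyl n, continuous G},
          (forall x, unit_cube n x -> G (x, 0) = f x) &
          (forall y, cube_cyl n y -> p (G y) = H y)].

(* C, with maps c : C -> A and r : C -> D, is the (topological) pullback
   A x_B D of l : A -> B and b : D -> B: the square commutes, c and r are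
   continuous, and the induced map C -> A x D is a homeomorphism onto the
   fibre product subspace {(a,d) | l a = b d} of A x D (product topology). *)
Definition is_pullback (A B C D : topologicalType)
  (c : C -> A) (r : C -> D) (l : A -> B) (b : D -> B) : Prop :=
  let g := fun z : C => (c z, r z) in
  [/\ continuous c, continuous r, continuous l & continuous b] /\
  [/\ (forall z, l (c z) = b (r z)),
      injective g,
      (forall a d, l a = b d -> exists z, g z = (a, d)) &
      (forall U : set C, open U -> exists V : set (A * D)%type, open V /\ U = g @^-1` V)].

(* Main.v *)
Require Import Defs.
From HB Require Import structures.
From mathcomp Require Import all_boot all_order all_algebra.
From mathcomp Require Import all_classical all_reals all_analysis.
From mathcomp Require Import Rstruct Rstruct_topology.
Import Order.TTheory GRing.Theory Num.Theory.
Local Open Scope classical_set_scope.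
Local Open Scope ring_scope.
Set Implicit Arguments.

Lemma within_comp (X Y Z : topologicalType) (A : set X) (B : set Y)
  (phi : X -> Y) (F : Y -> Z) :
  {within A, continuous phi} -> (forall x, A x -> B (phi x)) ->
  {within B, continuous F} -> {within A, continuous (F \o phi)}.
Proof.
move=> /subspace_continuousP hphi AB /subspace_continuousP hF.
apply/subspace_continuousP => x Ax.
apply: (cvg_comp _ _ _ (hF _ (AB _ Ax))).
move=> P /= hP.
have := hphi x Ax _ hP.
rewrite /= !nbhs_simpl /within /=.
apply: filterS => y /= h Ay; exact: h Ay (AB _ Ay).
Qed.

Lemma within_pair (X Y Z : topologicalType) (A : set X) (f : X -> Y) (g : X -> Z) :
  {within A, continuous f} -> {within A, continuous g} ->
  {within A, continuous (fun x => (f x, g x))}.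
Proof.
move=> /subspace_continuousP hf /subspace_continuousP hg.
apply/subspace_continuousP => x Ax.
exact: cvg_pair (hf x Ax) (hg x Ax).
Qed.

Lemma within_lift (X A C D : topologicalType) (c : C -> A) (r : C -> D)
  (Q : set X) (f : X -> A) (g : X -> D) (z : X -> C) :
  (forall U : set C, open U -> exists V : set (A * D)%type,
      open V /\ U = (fun w => (c w, r w)) @^-1` V) ->
  {within Q, continuous f} -> {within Q, continuous g} ->
  (forall x, Q x -> c (z x) = f x /\ r (z x) = g x) ->
  {within Q, continuous z}.
Proof.
move=> emb hf hg hz.
have /subspace_continuousP hfg := @within_pair _ _ _ _ _ _ hf hg.
apply/subspace_continuousP => x Qx U.
rewrite nbhsE => -[U' [oU' U'x] U'U].
have [V [oV eU']] := emb U' oU'.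
have Vx : V (f x, g x).
  by have := U'x; rewrite eU' /= (hz x Qx).1 (hz x Qx).2.
have := hfg x Qx V (open_nbhs_nbhs (conj oV Vx)).
rewrite /= !nbhs_simpl /within /=.
apply: filterS => y /= h Qy; apply: U'U; rewrite eU' /=.
by rewrite (hz y Qy).1 (hz y Qy).2; exact: h.
Qed.

Lemma cube0 n : unit_cube n 0.
Proof. by move=> i; rewrite mxE lexx ler01. Qed.

Lemma itv01 (t : RR) : (`[0, 1]%classic : set RR) t <-> 0 <= t <= 1.
Proof. by rewrite /= in_itv. Qed.

Lemma cyl_in n x t : unit_cube n x -> 0 <= t <= 1 -> cube_cyl n (x, t).
Proof. by move=> hx ht; split => //=; apply/itv01. Qed.

Lemma cyl_out n y : cube_cyl n y -> unit_cube n y.1 /\ 0 <= y.2 <= 1.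
Proof. by case: y => x t [hx ht]; split => //; apply/itv01. Qed.

Lemma cubeZ n x (t : RR) : unit_cube n x -> 0 <= t <= 1 -> unit_cube n (t *: x).
Proof.
move=> hx /andP[t0 t1] i; rewrite mxE; have /andP[x0 x1] := hx i.
by rewrite mulr_ge0 //= mulr_ile1.
Qed.

Lemma contZ n : continuous (fun y : ('rV[RR]_n * RR)%type => y.2 *: y.1).
Proof.
move=> y.
apply: (@cvgZ _ _ _ _ _ (fun y : ('rV[RR]_n * RR)%type => y.2) (fun y => y.1)).
  exact: cvg_snd.
exact: cvg_fst.
Qed.

Lemma cont1 n : continuous (fun x : 'rV[RR]_n => (x, (1 : RR))).
Proof.
move=> x.
have := (@cvg_pair _ _ _ _ _ _ _ _ _ (fun x : 'rV[RR]_n => x) (fun _ => (1:RR)) (@cvg_id _ (nbhs x)) (cvg_cst (1:RR))).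
by apply.
Qed.

Lemma within_compl (X Y Z : topologicalType) (A : set X) (phi : X -> Y) (F : Y -> Z) :
  {within A, continuous phi} -> continuous F -> {within A, continuous (F \o phi)}.
Proof.
move=> hphi hF; apply: (@within_comp _ _ _ A setT) => //.
exact: continuous_subspaceT.
Qed.

Unset Implicit Arguments.

Theorem lemma4p18 (A B C D : topologicalType)
  (c : C -> A) (r : C -> D) (l : A -> B) (b : D -> B) :
  is_pullback c r l b ->
  serre_fibration r -> serre_fibration b -> (forall y : B, exists x : D, b x = y) ->
  serre_fibration l.
Proof.
move=> [[cc cr cl cb] [comm inj ex emb]] [_ sr] [_ sb] surj.
split => // n f H hf hH h0.
have [d0 hd0] := surj (l (f 0)).
pose K := fun y : ('rV[RR]_n * RR)%type => l (f (y.2 *: y.1)).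
have hK : {within cube_cyl n, continuous K}.
  have := @within_comp _ _ _ (cube_cyl n) (unit_cube n)
    (fun y : ('rV[RR]_n * RR)%type => y.2 *: y.1) (l \o f)
    (continuous_subspaceT (@contZ n)).
  apply.
    by move=> y /cyl_out [hy1 hy2]; apply: cubeZ.
  exact: within_compl.
have hc : {within unit_cube n, continuous (fun _ : 'rV[RR]_n => d0)}.
  by apply: continuous_subspaceT; exact: cst_continuous.
have [G1 [hG1 hG10 hG1p]] := sb n (fun _ => d0) K hc hK
  (fun x Qx => etrans (congr1 (fun v => l (f v)) (scale0r x)) (esym hd0)).
pose g := fun x : 'rV[RR]_n => G1 (x, 1).
have hg : {within unit_cube n, continuous g}.
  apply: (@within_comp _ _ _ (unit_cube n) (cube_cyl n) (fun x => (x, 1)) G1) => //.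
    exact: continuous_subspaceT (@cont1 n).
  by move=> x Qx; apply: cyl_in => //; rewrite ler01 lexx.
have hgl : forall x, unit_cube n x -> b (g x) = l (f x).
  move=> x Qx; rewrite /g hG1p; last by apply: cyl_in => //; rewrite ler01 lexx.
  by rewrite /K /= scale1r.
have [G2 [hG2 hG20 hG2p]] := sb n g H hg hH
  (fun x Qx => etrans (h0 x Qx) (esym (hgl x Qx))).
have [z0 _] : exists z0 : C, True.
  have [w _] := ex (f 0) (g 0) (esym (hgl 0 (@cube0 n))).
  by exists w.
have [z hz] : {z : 'rV[RR]_n -> C &
    forall x, unit_cube n x -> c (z x) = f x /\ r (z x) = g x}.
  apply: (@choice _ _ (fun x w => unit_cube n x -> c w = f x /\ r w = g x)) => x; case: (pselect (unit_cube n x)) => Qx; last by exists z0.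
  have [w ew] := ex (f x) (g x) (esym (hgl x Qx)).
  exists w => _; by move: ew => /= [-> ->].
have hzc := @within_lift _ _ _ _ _ _ _ _ _ _ emb hf hg hz.
have [G3 [hG3 hG30 hG3p]] := sr n z G2 hzc hG2
  (fun x Qx => etrans (hG20 x Qx) (esym (hz x Qx).2)).
exists (c \o G3); split.
- exact: within_compl.
- by move=> x Qx /=; rewrite hG30 // (hz x Qx).1.
- by move=> y hy /=; rewrite comm hG3p // hG2p.
Qed.
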